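(* Let $M_1$ and $M_2$ be smooth connected manifolds and $\Gamma\subset\mathrm{Diff}(M_1)\times\mathrm{Diff}(M_2)$ a group of diffeomorphisms of $M_1\times M_2$ that is of quotient type. Then $\Gamma$ is properly discontinuous.
   Context: A group $\Gamma$ of diffeomorphisms of a manifold $M$ is properly discontinuous if (PD1) each $p\in M$ has a neighbourhood $U$ with $\gamma(U)\cap U=\emptyset$ for all $\gamma\in\Gamma\setminus\{1\}$, and (PD2) any two points $p,q$ not in the same $\Gamma$-orbit have neighbourhoods $U_p,U_q$ with $\gamma(U_p)\cap U_q=\emptyset$ for all $\gamma\in\Gamma$. For $\Gamma\subset\mathrm{Diff}(M_1)\times\mathrm{Diff}(M_2)$ let $\Gamma_i$ be its projection to $\mathrm{Diff}(M_i)$ and, for $\sigma\in\Gamma_2$, $\Gamma_\sigma:=\{\gamma\in\Gamma_1:(\gamma,\sigma)\in\Gamma\}$. $\Gamma$ is of quotient type if (i) $\Gamma_2$ is properly discontinuous, (ii) $\Gamma_{\mathrm{Id}_{M_2}}\subset\Gamma_1$ satisfies (PD1), and (iii) $\Gamma_\sigma\subset\Gamma_1$ satisfies (PD2) (in the sense: points of $M_1$ not related by an element of $\Gamma_\sigma$ have neighbourhoods $U,V$ with $\gamma(U)\cap V=\emptyset$ for all $\gamma\in\Gamma_\sigma$) for all $\sigma\in\Gamma_2$; or if the same holds with the roles of $M_1$ and $M_2$ exchanged. *)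

(* Defs.v *)
From mathcomp Require Import all_boot.
From mathcomp Require Import boolp classical_sets topology.
Set Implicit Arguments. Unset Strict Implicit. Unset Printing Implicit Defensive.
Local Open Scope classical_set_scope.

(* f is a homeomorphism of T (stand-in for "diffeomorphism") *)
Definition is_homeo (T : topologicalType) (f : T -> T) : Prop :=
  continuous f /\ exists g : T -> T, [/\ continuous g, cancel f g & cancel g f].

Definition PD1 (T : topologicalType) (G : set (T -> T)) : Prop :=
  forall p : T, exists U : set T, nbhs p U /\
    forall g, G g -> g <> id -> g @` U `&` U = set0.

Definition PD2 (T : topologicalType) (G : set (T -> T)) : Prop :=
  forall p q : T, ~ (exists g, G g /\ g p = q) ->
    exists U V : set T, [/\ nbhs p U, nbhs q V &
      forall g, G g -> g @` U `&` V = set0].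

Definition properly_discontinuous (T : topologicalType) (G : set (T -> T)) :=
  PD1 G /\ PD2 G.

Definition diff_group (M1 M2 : topologicalType)
    (Gam : set ((M1 -> M1) * (M2 -> M2))) : Prop :=
  [/\ (forall a, Gam a -> is_homeo a.1 /\ is_homeo a.2),
      Gam (id, id),
      (forall a b, Gam a -> Gam b -> Gam (a.1 \o b.1, a.2 \o b.2)) &
      (forall a, Gam a -> exists b, Gam b /\
         [/\ b.1 \o a.1 = id, b.2 \o a.2 = id, a.1 \o b.1 = id & a.2 \o b.2 = id])].

Section Proj.
Variables (M1 M2 : topologicalType) (Gam : set ((M1 -> M1) * (M2 -> M2))).
Definition proj1_grp : set (M1 -> M1) := [set g | exists s, Gam (g, s)].
Definition proj2_grp : set (M2 -> M2) := [set s | exists g, Gam (g, s)].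
Definition fiber1 (s : M2 -> M2) : set (M1 -> M1) := [set g | Gam (g, s)].
Definition fiber2 (g : M1 -> M1) : set (M2 -> M2) := [set s | Gam (g, s)].

Definition quotient_type12 : Prop :=
  [/\ properly_discontinuous proj2_grp, PD1 (fiber1 id) &
      forall s, proj2_grp s -> PD2 (fiber1 s)].
Definition quotient_type21 : Prop :=
  [/\ properly_discontinuous proj1_grp, PD1 (fiber2 id) &
      forall g, proj1_grp g -> PD2 (fiber2 g)].
Definition quotient_type : Prop := quotient_type12 \/ quotient_type21.

Definition prod_action : set (M1 * M2 -> M1 * M2) :=
  [set (fun z => (a.1 z.1, a.2 z.2)) | a in Gam].
End Proj.

(* Main.v *)
Require Import Defs.
From mathcomp Require Import all_boot.
From mathcomp Require Import boolp classical_sets topology.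
Local Open Scope classical_set_scope.

Lemma nbhsX' (A B : topologicalType) (p : A) (q : B) U V :
  nbhs p U -> nbhs q V -> nbhs (p,q) (U `*` V).
Proof. move=> hU hV; exists (U,V) => //. Qed.

Lemma nbhs_img (T : topologicalType) (f : T -> T) x W :
  is_homeo f -> nbhs x W -> nbhs (f x) (f @` W).
Proof.
move=> [_ [g [cg fK gK]]] hW.
have : nbhs (f x) (g @^-1` W).
  have h := cg (f x); rewrite /continuous_at fK in h; exact: h.
apply: filterS => y Wy; exists (g y) => //.
Qed.

Definition PD1' (A B : topologicalType) (Gam : set ((A -> A) * (B -> B))) :=
  forall (p : A) (q : B), exists U V, [/\ nbhs p U, nbhs q V &
    forall a, Gam a -> ~ (a.1 = id /\ a.2 = id) -> forall x y, U x -> V y ->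
      ~ (U (a.1 x) /\ V (a.2 y))].

Definition PD2' (A B : topologicalType) (Gam : set ((A -> A) * (B -> B))) :=
  forall (p1 : A) (q1 : B) p2 q2, ~ (exists a, [/\ Gam a, a.1 p1 = p2 & a.2 q1 = q2]) ->
    exists U1 V1 U2 V2, [/\ nbhs p1 U1, nbhs q1 V1, nbhs p2 U2, nbhs q2 V2 &
      forall a, Gam a -> forall x y, U1 x -> V1 y -> ~ (U2 (a.1 x) /\ V2 (a.2 y))].

Arguments PD1' {A B}.
Arguments PD2' {A B}.

Lemma helper1 (A B : topologicalType) (Gam : set ((A -> A) * (B -> B))) :
  diff_group Gam -> PD1 (proj2_grp Gam) ->
  forall s0, proj2_grp Gam s0 -> forall x, exists W, [/\ nbhs x W,
    nbhs (s0 x) (s0 @` W) &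
    forall s, proj2_grp Gam s -> forall y z, W y -> W z -> s y = s0 z -> s = s0].
Proof.
move=> [hh hid hc hinv] pd1 s0 [g0 Gs0] x.
have [W [nW HW]] := pd1 x.
exists W; split => //.
  by apply: nbhs_img => //; case: (hh _ Gs0).
move=> s [g Gs] y z Wy Wz e.
have [b [Gb [_ e2 _ e4]]] := hinv _ Gs0.
have St : proj2_grp Gam (b.2 \o s).
  by exists (b.1 \o g); have := hc _ _ Gb Gs.
have ty : (b.2 \o s) y = z by rewrite /= e; have := congr1 (fun f => f z) e2.
have [ti|tn] := pselect (b.2 \o s = id).
  have := congr1 (fun f => s0 \o f) ti.
  rewrite compA e4 /=. done.
exfalso; have := HW _ St tn.
move=> /(congr1 (fun S => S z)) /=; rewrite /set0 => <-.
by split => //; exists y.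
Qed.

Lemma core (A B : topologicalType) (Gam : set ((A -> A) * (B -> B))) :
  diff_group Gam -> quotient_type12 Gam -> PD1' Gam /\ PD2' Gam.
Proof.
move=> hG [[pd1 pd2] f1 f2]; split.
  move=> p q.
  have [U2 [nU2 HU2]] := pd1 q.
  have [U1 [nU1 HU1]] := f1 p.
  exists U1, U2; split => // a Ga na x y Ux Uy [Ux' Uy'].
  have [e|ne] := pselect (a.2 = id).
    have ne1 : a.1 <> id by move=> e1; apply: na.
    have Fa : fiber1 Gam id a.1 by rewrite /fiber1 /= -e; case: a Ga {na ne1 Ux' Uy' e}.
    have := HU1 _ Fa ne1.
    move=> /(congr1 (fun S => S (a.1 x))) /=; rewrite /set0 => <-.
    by split => //; exists x.
  have Pa : proj2_grp Gam a.2 by exists a.1; case: a Ga {na ne Ux' Uy'}.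
  have := HU2 _ Pa ne.
  move=> /(congr1 (fun S => S (a.2 y))) /=; rewrite /set0 => <-.
  by split => //; exists y.
move=> p1 q1 p2 q2 nrel.
have [[s0 [Ps0 e0]]|nq] := pselect (exists s, proj2_grp Gam s /\ s q1 = q2).
  have [W [nW nW' HW]] := @helper1 _ _ Gam hG pd1 _ Ps0 q1.
  have nr1 : ~ (exists g, fiber1 Gam s0 g /\ g p1 = p2).
    by move=> [g [Fg eg]]; apply: nrel; exists (g, s0).
  have [U1 [V1 [nU1 nV1 HUV]]] := f2 _ Ps0 _ _ nr1.
  exists U1, W, V1, (s0 @` W); split => //; first by rewrite -e0.
  move=> a Ga x y Ux Wy [Vx [z Wz ez]].
  have Pa : proj2_grp Gam a.2 by exists a.1; case: a Ga ez Vx.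
  have ea := HW _ Pa _ _ Wy Wz (esym ez).
  have Fa : fiber1 Gam s0 a.1 by rewrite /fiber1 /= -ea; case: a Ga ez Vx ea Pa.
  have := HUV _ Fa.
  move=> /(congr1 (fun S => S (a.1 x))) /=; rewrite /set0 => <-.
  by split => //; exists x.
have nq' : ~ (exists g, proj2_grp Gam g /\ g q1 = q2).
  by move=> [g [Pg eg]]; apply: nq; exists g.
have [U2 [V2 [nU2 nV2 HUV]]] := pd2 _ _ nq'.
exists setT, U2, setT, V2; split => //; try exact: filterT.
move=> a Ga x y _ Uy [_ Vy].
have Pa : proj2_grp Gam a.2 by exists a.1; case: a Ga Vy.
have := HUV _ Pa.
move=> /(congr1 (fun S => S (a.2 y))) /=; rewrite /set0 => <-.
by split => //; exists y.
Qed.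

Lemma swap_ok (A B : topologicalType) (Gam : set ((A -> A) * (B -> B))) :
  diff_group Gam -> quotient_type21 Gam -> PD1' Gam /\ PD2' Gam.
Proof.
move=> [hh hid hc hinv] hq.
pose Gam' := fun a' : (B -> B) * (A -> A) => Gam (a'.2, a'.1).
have dG : diff_group Gam'.
  split.
  - by move=> a /hh [].
  - exact: hid.
  - by move=> a b Ga Gb; apply: (hc _ _ Ga Gb).
  - move=> a Ga; have [b [Gb [e1 e2 e3 e4]]] := hinv _ Ga.
    by exists (b.2, b.1); split; [case: b Gb {e1 e2 e3 e4}|split].
have [p1 p2] := @core _ _ Gam' dG hq.
split.
  move=> p q; have [V [U [nV nU H]]] := p1 q p.
  exists U, V; split => // a Ga na x y Ux Vy [Ux' Vy'].
  have Ga' : Gam' (a.2, a.1) by case: a Ga na {Ux' Vy'}.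
  have na' : ~ ((a.2, a.1).1 = id /\ (a.2, a.1).2 = id) by move=> [e1 e2]; apply: na.
  exact: (H _ Ga' na' y x Vy Ux (conj Vy' Ux')).
move=> a1 b1 a2 b2 nr.
have nr' : ~ (exists a, [/\ Gam' a, a.1 b1 = b2 & a.2 a1 = a2]).
  by move=> [a [Ga e1 e2]]; apply: nr; exists (a.2, a.1).
have [V1 [U1 [V2 [U2 [nV1 nU1 nV2 nU2 H]]]]] := p2 _ _ _ _ nr'.
exists U1, V1, U2, V2; split => // a Ga x y Ux Vy [Ux' Vy'].
have Ga' : Gam' (a.2, a.1) by case: a Ga {Ux' Vy'}.
exact: (H _ Ga' y x Vy Ux (conj Vy' Ux')).
Qed.

Theorem lemma2 (M1 M2 : topologicalType)
  (hM1 : hausdorff_space M1) (hM2 : hausdorff_space M2)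
  (cM1 : connected [set: M1]) (cM2 : connected [set: M2])
  (Gam : set ((M1 -> M1) * (M2 -> M2)))
  (hG : diff_group Gam) (hq : quotient_type Gam) :
  properly_discontinuous (prod_action Gam).
Proof.
have [P1 P2] : PD1' Gam /\ PD2' Gam.
  by case: hq => hq; [exact: core | exact: swap_ok].
split.
  move=> [p q]; have [U [V [nU nV H]]] := P1 p q.
  exists (U `*` V); split; first exact: nbhsX'.
  move=> g [a Ga <-] na.
  apply/seteqP; split => // z [[w [Uw Vw] ez] [Uz Vz]].
  apply: (H a Ga _ _ _ Uw Vw).
    move=> [e1 e2]; apply: na; apply: funext => -[u v] /=.
    by rewrite e1 e2.
  by rewrite -ez in Uz Vz.
move=> [p1 q1] [p2 q2] nr.
have nr' : ~ (exists a, [/\ Gam a, a.1 p1 = p2 & a.2 q1 = q2]).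
  move=> [a [Ga e1 e2]]; apply: nr.
  by exists (fun z => (a.1 z.1, a.2 z.2)); split; [exists a | rewrite /= e1 e2].
have [U1 [V1 [U2 [V2 [nU1 nV1 nU2 nV2 H]]]]] := P2 _ _ _ _ nr'.
exists (U1 `*` V1), (U2 `*` V2); split; try exact: nbhsX'.
move=> g [a Ga <-].
apply/seteqP; split => // z [[w [Uw Vw] ez] [Uz Vz]].
apply: (H a Ga _ _ Uw Vw).
by rewrite -ez in Uz Vz.
Qed.
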